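(* Let $\delta\in(0,1)$, $k\ge1$, and let $G=S_k$ be the star with one hub and $k$ leaves, with vertex set $V$ and $\mathcal H=\{\{i,j\}:\{i,j\}\in E(S_k)\}$. Then $$\mu_{\mathrm{leaf}}(V;r^{v^G}_{\mathcal H})=\delta+\frac{2(k-1)}{3}\delta^2\quad\text{for every leaf},\qquad \mu_{\mathrm{hub}}(V;r^{v^G}_{\mathcal H})=k\delta+\frac{k(k-1)}{3}\delta^2.$$
   Context: For a finite simple undirected graph $G=(V,E)$ and $\delta\in(0,1)$: for $S\subseteq V$, $G[S]$ is the induced subgraph and $t_{ij}(G[S])$ the shortest-path distance in $G[S]$ ($=\infty$ if disconnected), with $\delta^\infty:=0$. The distance-polynomial worth is $v^G(S):=\sum_{i\in S}\sum_{j\in S,\,j\neq i}\delta^{t_{ij}(G[S])}$. For a conference structure $\mathcal H$ (family of subsets of $V$ of size $\ge2$) and $C\subseteq V$, $C/\mathcal H$ is the partition of $C$ into classes connected via chains of pairwise-intersecting members of $\mathcal H$ contained in $C$, and $r^{v^G}_{\mathcal H}(C):=\sum_{B\in C/\mathcal H}v^G(B)$. For a TU game $u$ on finite player set $N$, $\mu_i(N;u):=\sum_{S\subseteq N\setminus\{i\}}\frac{|S|!(|N|-|S|-1)!}{|N|!}(u(S\cup\{i\})-u(S))$. *)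

(* Defs.v *)
From HB Require Import structures.
From mathcomp Require Import all_boot all_order all_algebra.
Set Implicit Arguments. Unset Strict Implicit. Unset Printing Implicit Defensive.
Import Order.TTheory GRing.Theory Num.Theory.
Local Open Scope ring_scope.

Section GraphGames.
Variable T : finType.
(* A finite simple undirected graph is a symmetric irreflexive relation e on T. *)
Variable e : rel T.

Definition walkb (S : {set T}) (n : nat) (i j : T) : bool :=
  [exists p : n.-tuple T,
     [&& path e i p, last i p == j & all (fun x => x \in S) (i :: p)]].

(* least n < #|T| admitting such a walk (= shortest path length in G[S]),
   or #|T| if there is none (i.e. i, j disconnected in G[S]: distance oo) *)
Definition dist_idx (S : {set T}) (i j : T) : nat :=
  find (fun n => walkb S n i j) (iota 0 #|T|).

(* delta ^ t_ij(G[S]) with delta^oo = 0 *)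
Definition dpow (R : pzRingType) (delta : R) (S : {set T}) (i j : T) : R :=
  if (dist_idx S i j < #|T|)%N then delta ^+ dist_idx S i j else 0.

Definition worth (R : pzRingType) (delta : R) (S : {set T}) : R :=
  \sum_(i in S) \sum_(j in S | j != i) dpow delta S i j.

(* C/H : classes of C connected by chains of pairwise-intersecting
   members of the conference structure H contained in C *)
Definition conf_rel (H : {set {set T}}) (C : {set T}) : rel T :=
  fun x y => [exists h in H, [&& h \subset C, x \in h & y \in h]].

Definition conf_partition (H : {set {set T}}) (C : {set T}) : {set {set T}} :=
  equivalence_partition (fun x y => connect (conf_rel H C) x y) C.

Definition conf_game (R : pzRingType) (v : {set T} -> R) (H : {set {set T}})
  (C : {set T}) : R :=
  \sum_(B in conf_partition H C) v B.

End GraphGames.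

Definition shapley (T : finType) (R : fieldType) (N : {set T})
  (u : {set T} -> R) (i : T) : R :=
  \sum_(S : {set T} | S \subset N :\ i)
     ((#|S|`! * (#|N| - #|S| - 1)`!)%:R / (#|N|`!)%:R) * (u (i |: S) - u S).

Definition star_edge (k : nat) : rel 'I_k.+1 :=
  fun x y => (x != y) && ((x == ord0) || (y == ord0)).

Definition edge_conf (T : finType) (e : rel T) : {set {set T}} :=
  [set [set x; y] | x in T, y in T & e x y].
Arguments star_edge k : clear implicits.

(* Main.v *)
Require Import Defs.
From HB Require Import structures.
From mathcomp Require Import all_boot all_order all_algebra.
From mathcomp Require Import zify ring.
Import Order.TTheory GRing.Theory Num.Theory.
Local Open Scope ring_scope.


Lemma sum_subsets_card (R : pzRingType) (T : finType) (A : {set T}) (h : nat -> R) :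
  \sum_(S : {set T} | S \subset A) h #|S| =
  \sum_(s < #|A|.+1) 'C(#|A|, s)%:R * h s.
Proof.
rewrite (partition_big (fun S : {set T} => (inord #|S| : 'I_#|A|.+1)) xpredT) //=.
apply: eq_bigr => s _.
rewrite (eq_bigr (fun _ => h s)); last first.
  move=> S /andP[sSA /eqP <-]; rewrite inordK //; by rewrite ltnS subset_leq_card.
rewrite (eq_bigl (fun S => S \in [set S : {set T} | S \subset A & #|S| == s])).
  by rewrite sumr_const cards_draws mulr_natl.
move=> S; rewrite inE; case sSA: (S \subset A) => //=.
have le : (#|S| < #|A|.+1)%N by rewrite ltnS subset_leq_card.
apply/eqP/eqP => [<-|e]; first by rewrite inordK.
by apply: val_inj; rewrite /= inordK.
Qed.

Lemma split_sub (R : nmodType) (T : finType) (B : {set T}) (x : T) (F : {set T} -> R) :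
  x \in B ->
  \sum_(S : {set T} | S \subset B) F S =
  \sum_(S : {set T} | S \subset B :\ x) (F S + F (x |: S)).
Proof.
move=> xB; rewrite big_split /=.
rewrite [LHS](bigID (fun S : {set T} => x \in S)) /= addrC; congr (_ + _).
  apply: eq_bigl => S; apply/andP/idP.
    by case=> sSB xS; rewrite subsetD1 sSB.
  by rewrite subsetD1 => /andP.
rewrite (reindex_onto (fun S => x |: S) (fun S => S :\ x)) /=; last first.
  by move=> S /andP[_ xS]; rewrite setD1K.
apply: eq_bigl => S; rewrite setU11 andbT subsetD1.
apply/andP/andP.
  case=> sxB /eqP e; rewrite -e setD11; split=> //.
  by apply: subset_trans sxB; apply/subsetP => y; rewrite !inE => /andP[_ ->].
case=> sSB xS; rewrite setU1K // eqxx; split=> //.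
by rewrite subUset sub1set xB.
Qed.


Section Star.
Variable k : nat.
Local Notation T := 'I_k.+1.
Local Notation e := (star_edge k).
Local Notation hub := (ord0 : T).

Lemma walk0 (S : {set T}) i j : i != j -> walkb e S 0 i j = false.
Proof.
move=> ij; apply/existsP => -[p]; rewrite (tuple0 p) /=.
by rewrite (negbTE ij).
Qed.

Lemma walk_nohub (S : {set T}) n i j : hub \notin S -> i != j -> walkb e S n i j = false.
Proof.
move=> hS ij; apply/existsP => -[[[|x s] /= _]].
  by rewrite (negbTE ij).
case/and5P => /andP[exi _] _ iS xS _.
move: exi; rewrite /star_edge; case/andP => _ /orP[] /eqP E.
  by rewrite -E iS in hS.
by rewrite -E xS in hS.
Qed.

Lemma walk1 (S : {set T}) i j : e i j -> i \in S -> j \in S -> walkb e S 1 i j.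
Proof.
move=> eij iS jS; apply/existsP; exists [tuple j] => /=.
by rewrite eij eqxx iS jS.
Qed.

Lemma walk1_leaves (S : {set T}) i j : i != hub -> j != hub -> walkb e S 1 i j = false.
Proof.
move=> ih jh; apply/existsP => -[[[|x [|y s]] //= _]].
case/and3P => /andP[exi _] /eqP xj _; move: exi; rewrite xj /star_edge.
by rewrite (negbTE ih) (negbTE jh) andbF.
Qed.

Lemma walk2 (S : {set T}) i j : i != hub -> j != hub -> i \in S -> j \in S -> hub \in S ->
  walkb e S 2 i j.
Proof.
move=> ih jh iS jS hS; apply/existsP; exists [tuple hub; j] => /=.
rewrite /star_edge ih /= (eq_sym ord0 j) jh /= !eqxx /= iS hS jS /= ?orbT //.
Qed.

Variable R : pzRingType.
Variable delta : R.

Lemma dpow1 (S : {set T}) i j : (1 <= k)%N -> e i j -> i \in S -> j \in S ->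
  dpow e delta S i j = delta.
Proof.
move=> k1 eij iS jS.
have ij : i != j by case/andP: eij.
rewrite /dpow /dist_idx card_ord.
have -> : iota 0 k.+1 = [:: 0%N, 1%N & iota 2 k.-1].
  by rewrite -(prednK k1).
rewrite /= walk0 //= walk1 //=. by rewrite ltnS k1 expr1.
Qed.

Lemma dpow2 (S : {set T}) i j : i != hub -> j != hub -> i != j -> i \in S -> j \in S -> hub \in S ->
  dpow e delta S i j = delta ^+ 2.
Proof.
move=> ih jh ij iS jS hS.
have k2 : (2 <= k)%N.
  move: ih jh ij; rewrite -!(inj_eq val_inj) /=.
  have := ltn_ord i; have := ltn_ord j. lia.
rewrite /dpow /dist_idx card_ord.
have -> : iota 0 k.+1 = [:: 0%N, 1%N, 2%N & iota 3 k.-2].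
  by move: k2; case: (k) => [|[|k']].
rewrite /= walk0 //= walk1_leaves //= walk2 //=. by rewrite ltnS k2.
Qed.

Lemma dpow0 (S : {set T}) i j : hub \notin S -> i != j -> dpow e delta S i j = 0.
Proof.
move=> hS ij; rewrite /dpow /dist_idx.
rewrite hasNfind ?size_iota ?ltnn //.
by apply/hasPn => n _; rewrite walk_nohub.
Qed.

End Star.



Section Star2.
Variable k : nat.
Hypothesis k1 : (1 <= k)%N.
Local Notation T := 'I_k.+1.
Local Notation e := (star_edge k).
Local Notation hub := (ord0 : T).
Variable R : comNzRingType.
Variable delta : R.

Lemma worth_hub (S : {set T}) : hub \in S ->
  worth e delta S = (#|S|.-1 * 2)%:R * delta + (#|S|.-1 * #|S|.-2)%:R * delta ^+ 2.
Proof.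
move=> hS; rewrite /worth.
have inner i : \sum_(j in S | j != i) dpow e delta S i j = \sum_(j in S :\ i) dpow e delta S i j.
  by apply: eq_bigl => j; rewrite !inE andbC.
rewrite (eq_bigr _ (fun i _ => inner i)) (big_setD1 hub hS) /=.
rewrite (eq_bigr (fun _ => delta)); last first.
  move=> j; rewrite !inE => /andP[jh jS]; apply: dpow1 => //.
  by rewrite /star_edge eq_sym jh eqxx.
rewrite sumr_const.
rewrite (eq_bigr (fun _ => delta + delta ^+ 2 *+ #|S|.-2)); last first.
  move=> i; rewrite !inE => /andP[ih iS].
  have hSi : hub \in S :\ i by rewrite !inE eq_sym ih.
  rewrite (big_setD1 hub hSi) /= dpow1 //; last by rewrite /star_edge ih eqxx orbT.
  rewrite (eq_bigr (fun _ => delta ^+ 2)); last first.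
    move=> j; rewrite !inE => /and3P[jh ji jS]; apply: dpow2 => //.
    by rewrite eq_sym.
  rewrite sumr_const; congr (_ + _ *+ _).
  rewrite (cardsD1 i S) iS (cardsD1 hub (S :\ i)) hSi.
  by rewrite setDDl.
rewrite sumr_const.
have cS : #|S :\ hub| = #|S|.-1 by rewrite (cardsD1 hub S) hS.
rewrite cS.
rewrite -(mulr_natl delta) -(mulr_natl (delta + _)) -(mulr_natl (delta ^+ 2)) !natrM.
move: (#|S|.-1) (#|S|.-2) => a b.
ring.
Qed.
End Star2.


Section Star3.
Variable k : nat.
Local Notation T := 'I_k.+1.
Local Notation e := (star_edge k).
Local Notation hub := (ord0 : T).
Variable R : pzRingType.
Variable delta : R.

Lemma worth_nohub (S : {set T}) : hub \notin S -> worth e delta S = 0.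
Proof.
move=> hS; apply: big1 => i _; apply: big1 => j /andP[_ ji].
by apply: dpow0; rewrite // eq_sym.
Qed.

Lemma rel_hub {C : {set T}} y : hub \in C -> y \in C -> y != hub ->
  conf_rel (edge_conf e) C y hub /\ conf_rel (edge_conf e) C hub y.
Proof.
move=> hC yC yh.
have hE : [set y; hub] \in edge_conf e.
  apply/imset2P; exists y hub => //; rewrite inE /star_edge yh eqxx orbT //.
have sub : [set y; hub] \subset C by rewrite subUset !sub1set yC hC.
split; apply/existsP; exists [set y; hub]; by rewrite hE sub !inE !eqxx ?orbT.
Qed.

Lemma part_hub (C : {set T}) : hub \in C -> conf_partition (edge_conf e) C = [set C].
Proof.
move=> hC.
have Px x : x \in C -> [set y in C | connect (conf_rel (edge_conf e) C) x y] = C.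
  move=> xC; apply/setP => y; rewrite inE; case yC: (y \in C) => //=.
  apply: (connect_trans (y:=hub)).
    have [->|xh] := eqVneq x hub; first exact: connect0.
    by apply: connect1; case: (@rel_hub C x hC xC xh).
  have [->|yh] := eqVneq y hub; first exact: connect0.
  by apply: connect1; case: (@rel_hub C y hC yC yh).
apply/setP => B; rewrite inE /conf_partition /equivalence_partition.
apply/imsetP/eqP => [[x xC ->]|->]; first by rewrite Px.
by exists hub => //; rewrite Px.
Qed.

Lemma u_eq (C : {set T}) :
  conf_game (worth e delta) (edge_conf e) C = if hub \in C then worth e delta C else 0.
Proof.
rewrite /conf_game; case: ifP => hC.
  by rewrite part_hub // big_set1.
apply: big1 => B /imsetP[x xC ->]; apply: worth_nohub.
by rewrite inE hC.
Qed.
End Star3.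


Lemma L1 n : (\sum_(s < n) s.+1 * 2 = n * n.+1)%N.
Proof. elim: n => [|n IH]; first by rewrite big_ord0. rewrite big_ord_recr /= IH. lia. Qed.
Lemma L2 n : (3 * \sum_(s < n) s.+1 * s * 2 = 2 * (n.+1 * n * n.-1))%N.
Proof. elim: n => [|n IH]; first by rewrite big_ord0. rewrite big_ord_recr /= mulnDr IH. case: n {IH} => [|n] /=; nia. Qed.
Lemma L3 n : (\sum_(s < n) s * 2 = n * n.-1)%N.
Proof. elim: n => [|n IH]; first by rewrite big_ord0. rewrite big_ord_recr /= IH. case: n {IH} => [|n] /=; nia. Qed.
Lemma L4 n : (3 * \sum_(s < n) s * s.-1 = n * n.-1 * n.-2)%N.
Proof. elim: n => [|n IH]; first by rewrite big_ord0. rewrite big_ord_recr /= mulnDr IH. case: n {IH} => [|[|n]] /=; nia. Qed.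


Section Main.
Variable R : realFieldType.
Variable delta : R.
Variable k : nat.
Hypothesis k1 : (1 <= k)%N.
Local Notation T := 'I_k.+1.
Local Notation e := (star_edge k).
Local Notation hub := (ord0 : T).

Definition Wf (n : nat) : R := (n.-1 * 2)%:R * delta + (n.-1 * n.-2)%:R * delta ^+ 2.

Lemma ulem (C : {set T}) :
  conf_game (worth e delta) (edge_conf e) C = if hub \in C then Wf #|C| else 0.
Proof. by rewrite u_eq; case: ifP => // hC; rewrite worth_hub. Qed.

Lemma nat_a : (\sum_(s < k.-1.+1) 'C(k.-1, s) * (s.+1`! * (k.+1 - s.+1 - 1)`!) * 2 = k.+1`!)%N.
Proof.
rewrite (eq_bigr (fun s : 'I_k.-1.+1 => (k.-1)`! * (s.+1 * 2)))%N; last first.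
  move=> s _; have hs : (s <= k.-1)%N by rewrite -ltnS.
  have := bin_fact hs; rewrite factS.
  have -> : (k.+1 - s.+1 - 1 = k.-1 - s)%N by lia.
  nia.
rewrite -big_distrr /= L1 prednK //.
rewrite -(prednK k1) /= !factS; nia.
Qed.

Lemma nat_b : (3 * \sum_(s < k.-1.+1) 'C(k.-1, s) * (s.+1`! * (k.+1 - s.+1 - 1)`!) * (s * 2)
   = 2 * k.-1 * k.+1`!)%N.
Proof.
rewrite (eq_bigr (fun s : 'I_k.-1.+1 => (k.-1)`! * (s.+1 * s * 2)))%N; last first.
  move=> s _; have hs : (s <= k.-1)%N by rewrite -ltnS.
  have := bin_fact hs; rewrite factS.
  have -> : (k.+1 - s.+1 - 1 = k.-1 - s)%N by lia.
  nia.
rewrite -big_distrr /= mulnCA L2 prednK //.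
rewrite -(prednK k1) /= !factS; nia.
Qed.


Lemma leaf (i : T) : i != hub ->
  shapley [set: T] (conf_game (worth e delta) (edge_conf e)) i =
  delta + 2 * (k%:R - 1) / 3 * delta ^+ 2.
Proof.
move=> ih.
rewrite /shapley cardsT card_ord.
have hB : hub \in [set: T] :\ i by rewrite !inE eq_sym ih.
rewrite (split_sub _ _ _ _ _ hB).
set F := (k.+1`!)%:R : R.
rewrite (eq_bigr (fun S : {set T} =>
   (#|S|.+1`! * (k.+1 - #|S|.+1 - 1)`!)%:R / F * (Wf #|S|.+2 - Wf #|S|.+1))); last first.
  move=> S sS.
  have hS : hub \notin S by apply/negP => /(subsetP sS); rewrite !inE eqxx.
  have iS : i \notin S by apply/negP => /(subsetP sS); rewrite !inE eqxx andbF.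
  have h1 : hub \in i |: S = false by rewrite !inE eq_sym (negbTE ih) (negbTE hS).
  have h3 : hub \in i |: (hub |: S) by rewrite !inE eqxx orbT.
  have h4 : hub \in hub |: S by rewrite !inE eqxx.
  have c1 : #|hub |: S| = #|S|.+1 by rewrite cardsU1 hS.
  have c2 : #|i |: (hub |: S)| = #|S|.+2.
    by rewrite cardsU1 c1 !inE (negbTE ih) (negbTE iS).
  rewrite !ulem h1 (negbTE hS) h3 h4 subrr mulr0 add0r c1 c2 //.
rewrite (sum_subsets_card _ _ _ (fun s => (s.+1`! * (k.+1 - s.+1 - 1)`!)%:R / F * (Wf s.+2 - Wf s.+1))).
have cA : #|[set: T] :\ i :\ hub| = k.-1.
  move: (cardsD1 i [set: T]) (cardsD1 hub ([set: T] :\ i)).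
  rewrite cardsT card_ord hB !inE /=; move: #|[set: T] :\ i| #|[set: T] :\ i :\ hub| => a b E1 E2; have := prednK k1; lia.
rewrite cA.
rewrite (eq_bigr (fun s : 'I_k.-1.+1 =>
  ('C(k.-1, s) * (s.+1`! * (k.+1 - s.+1 - 1)`!) * 2)%:R / F * delta +
  ('C(k.-1, s) * (s.+1`! * (k.+1 - s.+1 - 1)`!) * (s * 2))%:R / F * delta ^+ 2)); last first.
  move=> s _; rewrite /Wf.
  move: F^-1 => Fi.
  rewrite !natrM.
  move: ('C(k.-1, s)%:R : R) (s.+1`!%:R : R) ((k.+1 - s.+1 - 1)`!%:R : R) => x1 x2 x3.
  have key : ((s.+1.-1)%:R * (s.+1.-2)%:R : R) = (s%:R : R) * (s%:R - 1).
    by case: (nat_of_ord s) => [|n] /=; rewrite ?mul0r // -natr1 addrK.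
  rewrite key /= -natr1.
  ring.
rewrite big_split /= -mulr_suml -mulr_suml -mulr_suml -mulr_suml -!natr_sum nat_a.
have Fn0 : F != 0 by rewrite /F pnatr_eq0 -lt0n fact_gt0.
have hb := nat_b.
set B := (\sum_(_ < _) _)%N in hb *.
have -> : (B%:R : R) = (2 * k.-1)%:R * F / 3.
  apply: (@mulIf _ 3); first by rewrite pnatr_eq0.
  rewrite mulfVK ?pnatr_eq0 // /F -natrM -natrM mulnC hb //.
rewrite divff // mul1r.
have -> : ((2 * k.-1)%:R : R) = 2 * (k%:R - 1) by rewrite natrM; congr (_ * _); rewrite -[in RHS](prednK k1) -natr1 addrK.
by field; exact: Fn0.
Qed.

Lemma nat_c : (\sum_(s < k.+1) 'C(k, s) * (s`! * (k.+1 - s - 1)`!) * (s * 2) = k * k.+1`!)%N.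
Proof.
rewrite (eq_bigr (fun s : 'I_k.+1 => k`! * (s * 2)))%N; last first.
  move=> s _; have hs : (s <= k)%N by rewrite -ltnS.
  have := bin_fact hs.
  have -> : (k.+1 - s - 1 = k - s)%N by lia.
  nia.
rewrite -big_distrr /= L3 /= factS; nia.
Qed.

Lemma nat_d : (3 * \sum_(s < k.+1) 'C(k, s) * (s`! * (k.+1 - s - 1)`!) * (s * s.-1)
   = k.+1`! * k * k.-1)%N.
Proof.
rewrite (eq_bigr (fun s : 'I_k.+1 => k`! * (s * s.-1)))%N; last first.
  move=> s _; have hs : (s <= k)%N by rewrite -ltnS.
  have := bin_fact hs.
  have -> : (k.+1 - s - 1 = k - s)%N by lia.
  nia.
rewrite -big_distrr /= mulnCA L4 /= factS; nia.
Qed.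

Lemma hubval :
  shapley [set: T] (conf_game (worth e delta) (edge_conf e)) hub =
  k%:R * delta + k%:R * (k%:R - 1) / 3 * delta ^+ 2.
Proof.
rewrite /shapley cardsT card_ord.
set F := (k.+1`!)%:R : R.
rewrite (eq_bigr (fun S : {set T} =>
   (#|S|`! * (k.+1 - #|S| - 1)`!)%:R / F * Wf #|S|.+1)); last first.
  move=> S sS.
  have hS : hub \notin S by apply/negP => /(subsetP sS); rewrite !inE eqxx.
  have h4 : hub \in hub |: S by rewrite !inE eqxx.
  have c1 : #|hub |: S| = #|S|.+1 by rewrite cardsU1 hS.
  by rewrite !ulem (negbTE hS) h4 subr0 c1.
rewrite (sum_subsets_card _ _ _ (fun s => (s`! * (k.+1 - s - 1)`!)%:R / F * Wf s.+1)).
have cA : #|[set: T] :\ hub| = k.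
  move: (cardsD1 hub [set: T]); rewrite cardsT card_ord !inE /=.
  by move=> /eqP; rewrite eqSS => /eqP.
rewrite cA.
rewrite (eq_bigr (fun s : 'I_k.+1 =>
  ('C(k, s) * (s`! * (k.+1 - s - 1)`!) * (s * 2))%:R / F * delta +
  ('C(k, s) * (s`! * (k.+1 - s - 1)`!) * (s * s.-1))%:R / F * delta ^+ 2)); last first.
  move=> s _; rewrite /Wf.
  move: F^-1 => Fi.
  rewrite !natrM.
  move: ('C(k, s)%:R : R) (s`!%:R : R) ((k.+1 - s - 1)`!%:R : R) => x1 x2 x3.
  rewrite /=.
  ring.
rewrite big_split /= -mulr_suml -mulr_suml -mulr_suml -mulr_suml -!natr_sum nat_c.
have Fn0 : F != 0 by rewrite /F pnatr_eq0 -lt0n fact_gt0.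
have hb := nat_d.
set B := (\sum_(_ < _) _)%N in hb *.
have -> : (B%:R : R) = (k * k.-1)%:R * F / 3.
  apply: (@mulIf _ 3); first by rewrite pnatr_eq0.
  rewrite mulfVK ?pnatr_eq0 // /F -natrM -natrM; congr (_%:R); rewrite mulnC hb; lia.
have -> : ((k * k.-1)%:R : R) = k%:R * (k%:R - 1).
  by rewrite natrM; congr (_ * _); rewrite -[in RHS](prednK k1) -natr1 addrK.
rewrite natrM /F.
by field; exact: Fn0.
Qed.

Theorem mainT :
  let e := star_edge k in
  let u := conf_game (worth e delta) (edge_conf e) in
  (forall i : 'I_k.+1, i != ord0 ->
     shapley [set: 'I_k.+1] u i = delta + 2 * (k%:R - 1) / 3 * delta ^+ 2) /\
  shapley [set: 'I_k.+1] u ord0 = k%:R * delta + k%:R * (k%:R - 1) / 3 * delta ^+ 2.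
Proof. split; [exact: leaf | exact: hubval]. Qed.
End Main.

Theorem mainTheorem4 (R : realFieldType) (delta : R) (k : nat)
  (hdelta : 0 < delta < 1) (hk : (1 <= k)%N) :
  let e := star_edge k in
  let u := conf_game (worth e delta) (edge_conf e) in
  (forall i : 'I_k.+1, i != ord0 ->
     shapley [set: 'I_k.+1] u i = delta + 2 * (k%:R - 1) / 3 * delta ^+ 2) /\
  shapley [set: 'I_k.+1] u ord0 = k%:R * delta + k%:R * (k%:R - 1) / 3 * delta ^+ 2.
Proof. exact: (@mainT R delta k hk). Qed.
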